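(* Let $L$ spin-orbitals be indexed by $\{1,\dots,L\}$ and let $N_{\mathrm{occ}}$ be an integer with $1\le N_{\mathrm{occ}}<L$. Call an operator an o-operator if it is a creation or annihilation operator $\hat a^\dagger_p$ or $\hat a_p$ with $p\in\{1,\dots,N_{\mathrm{occ}}\}$, and a v-operator if $p\in\{N_{\mathrm{occ}}+1,\dots,L\}$. Let $n_o,n_v\geq 0$ and consider $n_o$ o-creation operators, $n_o$ o-annihilation operators, $n_v$ v-creation operators and $n_v$ v-annihilation operators, all regarded as $2n_o+2n_v$ distinct objects. Call an ordering of these operators into a chain of length $2n_o+2n_v$ admissible if both of the following hold: (a) the word obtained by reading the o-operators of the chain from left to right and replacing each o-creation operator by ''('' and each o-annihilation operator by '')'' is a Dyck word; (b) the word obtained by reading the v-operators of the chain from left to right and replacing each v-annihilation operator by ''('' and each v-creation operator by '')'' is a Dyck word. Then the number of admissible orderings is $$C_{n_o}\,C_{n_v}\,\binom{2n_o+2n_v}{2n_o}\,(n_o!)^2\,(n_v!)^2,$$ where $C_m=\frac{1}{m+1}\binom{2m}{m}$ is the $m$-th Catalan number.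
   Context: A Dyck word is a finite word over $\{(,)\}$ with as many opening as closing brackets, every prefix of which contains at least as many opening as closing brackets (the empty word is a Dyck word). The reference state is the Fermi vacuum, the Slater determinant in which spin-orbitals $1,\dots,N_{\mathrm{occ}}$ are occupied and the others are empty; the pair of words in (a),(b) is the paper's ''split-$\mathcal{L}_2$ translation'', and the paper calls admissible chains those whose expectation value relatively to the Fermi vacuum is ''possibly different from zero'', since otherwise that expectation value vanishes. *)

(* Defs.v *)
From mathcomp Require Import all_boot all_fingroup.
Set Implicit Arguments. Unset Strict Implicit. Unset Printing Implicit Defensive.

Inductive opkind := OCre | OAnn | VCre | VAnn.

(* Dyck words over {(,)} encoded as seq bool, with true = "(" and false = ")".
   Every prefix has at least as many "(" as ")" and the whole word is balanced. *)
Definition dyck (w : seq bool) : bool :=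
  all (fun k => count (fun b => ~~ b) (take k w) <= count id (take k w))
      (iota 0 (size w).+1)
  && (count id w == count (fun b => ~~ b) w).

(* The 2no+2nv distinct operators are labelled by 'I_(no+no+nv+nv):
   labels [0,no) are o-creation, [no,2no) o-annihilation,
   [2no,2no+nv) v-creation, [2no+nv,2no+2nv) v-annihilation. *)
Definition kind_of (no nv : nat) (i : 'I_(no + no + nv + nv)) : opkind :=
  if i < no then OCre
  else if i < no + no then OAnn
  else if i < no + no + nv then VCre
  else VAnn.

(* A chain (ordering) is a permutation s: position j holds operator s j. *)
Definition chain_kinds (no nv : nat) (s : {perm 'I_(no + no + nv + nv)}) : seq opkind :=
  [seq kind_of (s j) | j <- enum 'I_(no + no + nv + nv)].

Definition o_word (ks : seq opkind) : seq bool :=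
  pmap (fun k => match k with OCre => Some true | OAnn => Some false | _ => None end) ks.

Definition v_word (ks : seq opkind) : seq bool :=
  pmap (fun k => match k with VAnn => Some true | VCre => Some false | _ => None end) ks.

Definition admissible (no nv : nat) (s : {perm 'I_(no + no + nv + nv)}) : bool :=
  dyck (o_word (chain_kinds s)) && dyck (v_word (chain_kinds s)).

(* Catalan number C_m = binom(2m,m)/(m+1) (exact division). *)
Definition catalan (m : nat) : nat := 'C(m.*2, m) %/ m.+1.

(* Main.v *)
From HB Require Import structures.
Require Import Defs.
From mathcomp Require Import all_boot all_fingroup.
From mathcomp Require Import zify.
Set Implicit Arguments. Unset Strict Implicit. Unset Printing Implicit Defensive.

Definition ok_code (k : opkind) : bool * bool :=
  match k with OCre => (true, true) | OAnn => (true, false)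
             | VAnn => (false, true) | VCre => (false, false) end.
Definition ok_decode (p : bool * bool) : opkind :=
  match p with (true, true) => OCre | (true, false) => OAnn
             | (false, true) => VAnn | (false, false) => VCre end.
Lemma ok_codeK : cancel ok_code ok_decode. Proof. by case. Qed.
HB.instance Definition _ := Finite.copy opkind (can_type ok_codeK).

Lemma card_tuple_cons (T : finType) n (P : pred (n.+1.-tuple T)) :
  #|[set t : n.+1.-tuple T | P t]| =
  \sum_(x : T) #|[set t : n.-tuple T | P [tuple of x :: t]]|.
Proof.
rewrite -sum1dep_card (partition_big (@thead _ _) predT) //=.
apply: eq_bigr => x _; rewrite -sum1dep_card.
rewrite (reindex (fun t : n.-tuple T => [tuple of x :: t])) /=; last first.
  pose ttail (t : n.+1.-tuple T) := [tuple of behead t].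
  exists ttail => [t _ | t /andP[_ /eqP <-]]; first exact: val_inj.
  by rewrite -tuple_eta.
by apply: eq_bigl=> t; rewrite theadE eqxx andbT.
Qed.

Definition eqk (j k : opkind) : bool :=
  match j, k with OCre,OCre | OAnn,OAnn | VCre,VCre | VAnn,VAnn => true | _,_ => false end.
Lemma eqkE j k : eqk j k = (j == k). Proof. by case: j; case: k. Qed.
Definition upd (c : opkind -> nat) k := fun j => if eqk j k then (c j).-1 else c j.
Fixpoint G (c : opkind -> nat) (w : seq opkind) : nat :=
  match w with [::] => 1 | k :: w' => c k * G (upd c k) w' end.

Lemma G_ext c c' w : (forall j, c j = c' j) -> G c w = G c' w.
Proof.
elim: w c c' => //= k w IH c c' H; rewrite H; congr (_ * _); apply: IH => j.
by rewrite /upd H.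
Qed.

Lemma fiber (T : finType) (kap : T -> opkind) n : forall (A : pred T) (w : seq opkind),
  size w = n ->
  #|[set t : n.-tuple T | [&& all A t, uniq t & map kap t == w]]|
  = G (fun k => #|[pred x | A x && (kap x == k)]|) w.
Proof.
elim: n => [|n IH] A w.
  case: w => // _ /=; rewrite -[RHS](card_tuple 0 T) -cardsT; apply: eq_card => t.
  by rewrite !inE [t]tuple0.
case: w => // k w /= [Hs].
rewrite card_tuple_cons /=.
rewrite (eq_bigr (fun x => if A x && (kap x == k) then
     G (upd (fun k => #|[pred x | A x && (kap x == k)]|) k) w else 0)); last first.
  move=> x _.
  have -> : #|[set t : n.-tuple T | [&& all A (x :: t), uniq (x :: t)
           & map kap (x :: t) == k :: w]]| =
        if A x && (kap x == k) then
          #|[set t : n.-tuple T | [&& all (predD1 A x) t, uniq t & map kap t == w]]|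
        else 0.
    case: ifP => Hx.
      apply: eq_card => t; rewrite !inE /= eqseq_cons.
      case/andP: Hx => -> ->; rewrite /=.
      rewrite [all (predD1 A x) t]all_predI all_predC has_pred1.
      by case: (x \in t); case: (all A t).
    apply/eqP; rewrite cards_eq0; apply/eqP/setP => t; rewrite !inE /= eqseq_cons.
    by move: Hx; case: (A x); case: (kap x == k) => //=; rewrite !andbF.
  case: ifP => // /andP [Ax /eqP kx]; rewrite IH //.
  apply: G_ext => j; rewrite /upd eqkE.
  case: eqP => [->|njk].
    rewrite [in RHS](cardD1 x) inE /= Ax kx eqxx /= add0n; apply: eq_card => y.
    by rewrite !inE /=; case: (y == x); rewrite ?andbF.
  apply: eq_card => y; rewrite !inE /=.
  case: eqP => // ->; rewrite kx.
  have /negbTE -> : k != j by apply/eqP => E; apply: njk; rewrite E.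
  by rewrite !andbF.
by rewrite -big_mkcond /= sum_nat_const.
Qed.

Definition cnt (k : opkind) (w : seq opkind) := count (pred1 k) w.

Lemma G_ffact c w : G c w = c OCre ^_ cnt OCre w * c OAnn ^_ cnt OAnn w
   * c VCre ^_ cnt VCre w * c VAnn ^_ cnt VAnn w.
Proof.
elim: w c => [|k w IH] c /=; first by [].
rewrite IH /cnt /upd /=.
case: k => /=; rewrite ?add0n ?add1n ffactnS; nia.
Qed.

Lemma count4 w : cnt OCre w + cnt OAnn w + cnt VCre w + cnt VAnn w = size w.
Proof. rewrite /cnt; elim: w => //= k w IH; case: k => /=; lia. Qed.

Definition cc (no nv : nat) (k : opkind) := match k with OCre | OAnn => no | _ => nv end.

Lemma G_val no nv w : size w = no + no + nv + nv ->
  G (cc no nv) w = if [&& cnt OCre w == no, cnt OAnn w == no, cnt VCre w == nv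
                        & cnt VAnn w == nv] then no`! * no`! * nv`! * nv`! else 0.
Proof.
move=> Hs; rewrite G_ffact /=.
case: ifP => [/and4P [/eqP -> /eqP -> /eqP -> /eqP ->]|H]; first by rewrite !ffactnn.
have := count4 w; rewrite Hs => H4.
have : (no < cnt OCre w) || (no < cnt OAnn w) || (nv < cnt VCre w) || (nv < cnt VAnn w).
  move: H; case: eqP; case: eqP; case: eqP; case: eqP => //= *; lia.
case/orP => [/orP [/orP [] | ] | ] => /ffact_small ->; by rewrite ?muln0 ?mul0n.
Qed.

Lemma card_interval N lo hi : lo <= hi <= N ->
  #|[pred x : 'I_N | lo <= x < hi]| = hi - lo.
Proof.
move=> /andP [H1 H2].
rewrite -sum1_card big_mkcond /=.
rewrite -(big_mkord xpredT (fun i => if lo <= i < hi then 1 else 0)).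
rewrite (big_cat_nat (n:=lo)) ?(leq_trans H1 H2) //= (big_cat_nat (n:=hi) H1 H2) /=.
rewrite big_nat_cond big1; last by move=> i /andP [/andP [_ Hi] _]; rewrite leqNgt Hi.
rewrite [X in _ + (X + _)]big_nat_cond (eq_bigr (fun _ => 1)); last by move=> i /andP [-> _].
rewrite -big_nat_cond sum_nat_const_nat muln1.
rewrite big_nat_cond big1; last by move=> i /andP [/andP [Hi _] _]; rewrite ltnNge Hi andbF.
by rewrite add0n addn0.
Qed.

Lemma kind_card no nv k :
  #|[pred x : 'I_(no + no + nv + nv) | predT x && (kind_of x == k)]| = cc no nv k.
Proof.
have E : forall lo hi, lo <= hi <= no + no + nv + nv ->
   (forall x : 'I_(no + no + nv + nv), (kind_of x == k) = (lo <= x < hi)) ->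
   #|[pred x : 'I_(no + no + nv + nv) | predT x && (kind_of x == k)]| = hi - lo.
  move=> lo hi Hl Hx; rewrite -(card_interval Hl); apply: eq_card => x.
  by rewrite !inE /= Hx.
move: E; case: k => E.
- rewrite (E 0 no) ?subn0 //; first lia.
  by move=> x; have Hx := ltn_ord x; rewrite /kind_of; do 3?case: ifP => ?; rewrite -eqkE /=; apply/idP/idP => //= ?; lia.
- rewrite (E no (no + no)) /=; [lia | lia |].
  by move=> x; have Hx := ltn_ord x; rewrite /kind_of; do 3?case: ifP => ?; rewrite -eqkE /=; apply/idP/idP => //= ?; lia.
- rewrite (E (no + no) (no + no + nv)) /=; [lia | lia |].
  by move=> x; have Hx := ltn_ord x; rewrite /kind_of; do 3?case: ifP => ?; rewrite -eqkE /=; apply/idP/idP => //= ?; lia.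
- rewrite (E (no + no + nv) (no + no + nv + nv)) /=; [lia | lia |].
  by move=> x; have Hx := ltn_ord x; rewrite /kind_of; do 3?case: ifP => ?; rewrite -eqkE /=; apply/idP/idP => //= ?; lia.
Qed.

Lemma find_agree (s : seq nat) (P Q : pred nat) :
  (forall i, i < size s -> i <= find P s -> P (nth 0 s i) = Q (nth 0 s i)) ->
  find Q s = find P s.
Proof.
elim: s => //= x s IH H.
have := H 0 erefl (leq0n _) => /= <-.
case Px: (P x) => //; congr S; apply: IH => i Hi Hf.
by have := H i.+1 Hi; rewrite /= Px; apply.
Qed.

Section Refl.
Variables (p q : pred bool).
Hypothesis Hpq : forall b, p (~~ b) = q b.
Hypothesis Hqp : forall b, q (~~ b) = p b.
Hypothesis Hc : forall b, p b = ~~ q b.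

Definition ex (w : seq bool) k := count p (take k w) < count q (take k w).
Definition fst w := find (ex w) (iota 0 (size w).+1).
Definition refl w := map negb (take (fst w) w) ++ drop (fst w) w.

Lemma size_refl w : size (refl w) = size w.
Proof. rewrite /refl size_cat size_map size_take size_drop; case: ifP => H; lia. Qed.

Lemma take_refl w k : k <= fst w -> take k (refl w) = map negb (take k w).
Proof.
move=> Hk; rewrite /refl.
case: (leqP k (size (map negb (take (fst w) w)))) => H.
  by rewrite takel_cat // -map_take take_takel.
move: H; rewrite size_map size_take; case: ifP => H1 H2; first lia.
rewrite drop_oversize ?cats0; last lia.
by rewrite take_oversize ?size_map ?size_take ?H1 ?take_oversize //; lia.
Qed.

Lemma drop_refl w : drop (fst w) (refl w) = drop (fst w) w.
Proof.
rewrite /refl; case: (leqP (fst w) (size w)) => H.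
  by rewrite drop_size_cat // size_map size_takel.
rewrite [LHS]drop_oversize; last by rewrite size_refl; lia.
by rewrite drop_oversize //; lia.
Qed.

Lemma count_negb (r : pred bool) (r' : pred bool) s :
  (forall b, r (~~ b) = r' b) -> count r (map negb s) = count r' s.
Proof. by move=> H; rewrite count_map; apply: eq_count => b /=; rewrite H. Qed.

End Refl.

Lemma fst_refl p q (Hpq : forall b, p (~~ b) = q b) (Hqp : forall b, q (~~ b) = p b) w :
  fst q p (refl p q w) = fst p q w.
Proof.
rewrite /fst size_refl; apply: find_agree => i; rewrite size_iota => Hi Hf.
rewrite nth_iota // add0n /ex take_refl //.
by rewrite (count_negb _ Hpq) (count_negb _ Hqp).
Qed.

Lemma refl_invol p q (Hpq : forall b, p (~~ b) = q b) (Hqp : forall b, q (~~ b) = p b) w :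
  refl q p (refl p q w) = w.
Proof.
rewrite {1}/refl fst_refl // take_refl // drop_refl.
by rewrite -map_comp (eq_map (g := id)) ?map_id ?cat_take_drop // => b /=; rewrite negbK.
Qed.

Lemma fst_count p q (Hc : forall b, p b = ~~ q b) w :
  has (ex p q w) (iota 0 (size w).+1) ->
  count q (take (fst p q w) w) = (count p (take (fst p q w) w)).+1.
Proof.
move=> Hh; have Hlt := Hh; rewrite has_find size_iota -/(fst p q w) in Hlt.
have Hex := nth_find 0 Hh; rewrite -/(fst p q w) nth_iota // add0n in Hex.
move: Hex Hlt; case E: (fst p q w) => [|i].
  by rewrite /ex take0.
move=> Hex Hlt.
have Hb : ex p q w i = false.
  have Hi : i < find (ex p q w) (iota 0 (size w).+1) by rewrite -/(fst p q w) E.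
  by have := before_find 0 Hi; rewrite nth_iota ?add0n //; lia.
move: Hex Hb; rewrite /ex (take_nth false); last lia.
rewrite -!cats1 !count_cat /= !addn0 Hc; case: (q _) => /=; lia.
Qed.

Lemma count_refl p q (Hqp : forall b, q (~~ b) = p b) (Hc : forall b, p b = ~~ q b) w :
  has (ex p q w) (iota 0 (size w).+1) ->
  (count q (refl p q w)).+1 = count q w.
Proof.
move=> Hh; have := fst_count Hc Hh.
rewrite /refl count_cat (count_negb _ Hqp).
move=> H; rewrite -[in RHS](cat_take_drop (fst p q w) w) count_cat H.
by rewrite addSn.
Qed.

Definition nb := (fun b : bool => ~~ b).

Lemma card_count m k : #|[set t : m.-tuple bool | count id t == k]| = 'C(m, k).
Proof.
elim: m k => [|m IH] k.
  rewrite bin0n; case: k => [|k].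
    by rewrite -[RHS](card_tuple 0 bool) -cardsT; apply: eq_card => t; rewrite !inE [t]tuple0.
  by apply/eqP; rewrite cards_eq0; apply/eqP/setP => t; rewrite !inE [t]tuple0.
rewrite card_tuple_cons big_bool /=.
case: k => [|k].
  have -> : #|[set t : m.-tuple bool | true + count id t == 0]| = 0.
    by apply/eqP; rewrite cards_eq0; apply/eqP/setP => t; rewrite !inE.
  rewrite add0n bin0 -(bin0 m) -IH.
  by apply: eq_card => t; rewrite !inE add0n.
rewrite binS -!IH addnC; congr (_ + _); apply: eq_card => t; rewrite !inE ?add0n //.
Qed.

Lemma Hid_nb b : id (~~ b) = nb b. Proof. by []. Qed.
Lemma Hnb_id b : nb (~~ b) = id b. Proof. by rewrite /nb negbK. Qed.
Lemma Hc1 b : id b = ~~ nb b. Proof. by rewrite /nb negbK. Qed.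
Lemma Hc2 b : nb b = ~~ id b. Proof. by []. Qed.

Lemma cnt_sum (w : seq bool) : count id w + count nb w = size w.
Proof. exact: count_predC. Qed.

Lemma cnt_sumt m (t : m.-tuple bool) : count id t + count nb t = m.
Proof. by rewrite cnt_sum size_tuple. Qed.

Lemma dyck_bal w : dyck w -> count id w = count nb w.
Proof. by case/andP => _ /eqP. Qed.

Lemma dyckE w : count id w = count nb w ->
  dyck w = ~~ has (ex id nb w) (iota 0 (size w).+1).
Proof.
move=> H; rewrite /dyck H eqxx andbT -all_predC; apply: eq_all => k.
by rewrite /ex /= -leqNgt.
Qed.

Lemma reflt_proof p q m (t : m.-tuple bool) : size (refl p q t) == m.
Proof. by rewrite size_refl size_tuple. Qed.
Definition reflt p q m (t : m.-tuple bool) : m.-tuple bool := Tuple (reflt_proof p q t).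

Lemma refl_X n (w : seq bool) : size w = n + n -> count id w = n.+1 ->
  ~~ dyck (refl nb id w) && (count id (refl nb id w) == n).
Proof.
move=> Hsz Hu.
have Hh : has (ex nb id w) (iota 0 (size w).+1).
  apply/hasP; exists (size w); first by rewrite mem_iota; lia.
  rewrite /ex take_size; have := cnt_sum w; lia.
have Hcr := count_refl (p := nb) (q := id) (fun b => erefl) Hc2 Hh.
have Hs := cnt_sum (refl nb id w); rewrite size_refl in Hs.
have Hbal : count id (refl nb id w) = count nb (refl nb id w) by lia.
rewrite dyckE // negbK has_find size_iota -/(fst id nb (refl nb id w)).
rewrite (fst_refl (p := nb) (q := id)) //; last by move=> b; rewrite /nb negbK.
rewrite size_refl.
rewrite has_find size_iota -/(fst nb id w) in Hh; rewrite Hh /=.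
apply/eqP; lia.
Qed.

Lemma refl_BD n (w : seq bool) : size w = n + n -> count id w = n -> ~~ dyck w ->
  count id (refl id nb w) = n.+1.
Proof.
move=> Hsz Hu.
have Hbal : count id w = count nb w by have := cnt_sum w; lia.
rewrite dyckE // negbK => Hh.
have Hcr := count_refl (p := id) (q := nb) Hnb_id Hc1 Hh.
have Hs := cnt_sum (refl id nb w); rewrite size_refl in Hs.
lia.
Qed.

Lemma dyck_card n :
  #|[set t : (n + n).-tuple bool | dyck t]| = 'C(n + n, n) - 'C(n + n, n.+1).
Proof.
set B := [set t : (n + n).-tuple bool | count id t == n].
set Dy := [set t : (n + n).-tuple bool | dyck t].
set X := [set t : (n + n).-tuple bool | count id t == n.+1].
have sDB : Dy \subset B.
  apply/subsetP => t; rewrite !inE => /dyck_bal H.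
  have := cnt_sumt t; lia.
have HB := cardsID Dy B.
rewrite (setIidPr sDB) in HB.
have -> : 'C(n + n, n) = #|B| by rewrite card_count.
have -> : 'C(n + n, n.+1) = #|X| by rewrite card_count.
suff -> : #|X| = #|B :\: Dy| by lia.
have inj : injective (@reflt id nb (n + n)).
  move=> t1 t2 E; apply: val_inj; have /= E' := congr1 val E.
  by rewrite -[LHS](refl_invol Hid_nb Hnb_id) E' (refl_invol Hid_nb Hnb_id).
rewrite -[RHS](card_imset _ inj); apply: eq_card => u; rewrite [u \in X]inE.
apply/idP/imsetP.
  move=> Hu; exists (reflt nb id u); last first.
    by apply: val_inj; rewrite /= refl_invol // => b; rewrite /nb negbK.
  by rewrite !inE; apply: refl_X; [rewrite size_tuple | apply/eqP].
case=> t; rewrite !inE => /andP [Hd Ht] ->; apply/eqP.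
by apply: refl_BD; [rewrite size_tuple | apply/eqP |].
Qed.

Lemma catalan_dyck n : catalan n = #|[set t : (n + n).-tuple bool | dyck t]|.
Proof.
rewrite dyck_card /catalan -addnn.
have H := mul_bin_left (n + n) n.
rewrite addnK in H.
set C := 'C(n + n, n) in H *; set C' := 'C(n + n, n.+1) in H *.
have E : C = n.+1 * (C - C') by nia.
rewrite {1}E.
by rewrite mulKn.
Qed.

Definition isO (k : opkind) := match k with OCre | OAnn => true | _ => false end.

Fixpoint merge (m o v : seq bool) : seq opkind :=
  match m with
  | [::] => [::]
  | true :: m' => (if head false o then OCre else OAnn) :: merge m' (behead o) v
  | false :: m' => (if head false v then VAnn else VCre) :: merge m' o (behead v)
  end.

Lemma size_merge m o v : size (merge m o v) = size m.
Proof. by elim: m o v => //= [[]] m IH o v /=; rewrite IH. Qed.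

Lemma map_isO_merge m o v : map isO (merge m o v) = m.
Proof. by elim: m o v => //= [[]] m IH o v /=; [case: ifP | case: ifP]; rewrite IH. Qed.

Lemma o_word_merge m o v : size o = count id m -> o_word (merge m o v) = o.
Proof.
elim: m o v => [|[] m IH] o v /=; first by case: o.
  by case: o => // x o [Ho]; case: x; rewrite /o_word /= -/(o_word _) IH.
by move=> Ho; case: ifP => _; rewrite /o_word /= -/(o_word _) IH.
Qed.

Lemma v_word_merge m o v : size v = count nb m -> v_word (merge m o v) = v.
Proof.
elim: m o v => [|[] m IH] o v /=; first by case: v.
  by move=> Ho; case: ifP => _; rewrite /v_word /= -/(v_word _) IH.
by case: v => // x v [Hv]; case: x; rewrite /v_word /= -/(v_word _) IH.
Qed.

Lemma merge_eta w : merge (map isO w) (o_word w) (v_word w) = w.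
Proof. by elim: w => //= k w IH; case: k; rewrite /o_word /v_word /= -/(o_word _) -/(v_word _) IH. Qed.

Lemma cnt_o w : cnt OCre w = count id (o_word w) /\ cnt OAnn w = count nb (o_word w)
   /\ cnt VAnn w = count id (v_word w) /\ cnt VCre w = count nb (v_word w)
   /\ count id (map isO w) = cnt OCre w + cnt OAnn w.
Proof.
rewrite /cnt; elim: w => //= k w IH; case: k; rewrite /o_word /v_word /= -/(o_word _) -/(v_word _) /=; lia.
Qed.

Definition goodc no nv (w : seq opkind) :=
  [&& cnt OCre w == no, cnt OAnn w == no, cnt VCre w == nv & cnt VAnn w == nv].
Definition adm' (w : seq opkind) := dyck (o_word w) && dyck (v_word w).

Lemma size_o_word w : size (o_word w) = cnt OCre w + cnt OAnn w.
Proof. by have [-> [-> _]] := cnt_o w; rewrite cnt_sum. Qed.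
Lemma size_v_word w : size (v_word w) = cnt VAnn w + cnt VCre w.
Proof. by have [_ [_ [-> [-> _]]]] := cnt_o w; rewrite cnt_sum. Qed.

Lemma dyck_half k (s : seq bool) : size s = k + k -> dyck s -> count id s = k /\ count nb s = k.
Proof. move=> Hs /dyck_bal H; have := cnt_sum s; lia. Qed.

Lemma merge_tproof n m o v (Hm : size m = n) : size (merge m o v) == n.
Proof. by rewrite size_merge Hm. Qed.

Lemma shuffle_card no nv :
  #|[set w : (no + no + nv + nv).-tuple opkind | goodc no nv w && adm' w]| =
  'C(no + no + nv + nv, no + no) * #|[set t : (no + no).-tuple bool | dyck t]|
    * #|[set t : (nv + nv).-tuple bool | dyck t]|.
Proof.
set N := no + no + nv + nv.
set S := [set w : N.-tuple opkind | goodc no nv w && adm' w].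
pose f (w : N.-tuple opkind) :=
  (map_tuple isO w, insubd (nseq_tuple (no + no) false) (o_word w),
   insubd (nseq_tuple (nv + nv) false) (v_word w)).
have Hgo : forall w : seq opkind, goodc no nv w -> size (o_word w) = no + no.
  by move=> w /and4P [/eqP ? /eqP ? _ _]; rewrite size_o_word; lia.
have Hgv : forall w : seq opkind, goodc no nv w -> size (v_word w) = nv + nv.
  by move=> w /and4P [_ _ /eqP ? /eqP ?]; rewrite size_v_word; lia.
have inj : {in S &, injective f}.
  move=> w1 w2; rewrite !inE => /andP [g1 _] /andP [g2 _] [E1 E2 E3].
  apply: val_inj => /=.
  rewrite -(merge_eta w1) -(merge_eta w2).
  rewrite E1.
  have := congr1 val E2; rewrite !val_insubd Hgo // Hgo // eqxx => ->.
  by have := congr1 val E3; rewrite !val_insubd Hgv // Hgv // eqxx => ->.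
rewrite -(card_in_imset inj) -card_count -!cardsX; apply: eq_card => [[[m o] v]].
rewrite !in_setX !inE.
symmetry; apply/idP/imsetP.
  case/andP => [/andP [Hm Ho] Hv].
  have Hsm : size m = N by rewrite size_tuple.
  pose w : N.-tuple opkind := Tuple (merge_tproof o v Hsm).
  have [Hco Hno] := dyck_half (size_tuple o) Ho.
  have [Hcv Hnv] := dyck_half (size_tuple v) Hv.
  have Hcm : count id m = no + no by apply/eqP.
  have Hnm : count nb m = nv + nv by have := cnt_sum m; rewrite Hsm; lia.
  have Eo : o_word w = o by rewrite /= o_word_merge // size_tuple.
  have Ev : v_word w = v by rewrite /= v_word_merge // size_tuple.
  exists w.
    have [C1 [C2 [C3 [C4 _]]]] := cnt_o w.
    rewrite inE /goodc /adm' C1 C2 C3 C4 Eo Ev Ho Hv Hco Hno Hcv Hnv !eqxx //.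
  congr (_, _, _).
  - by apply: val_inj; rewrite /= map_isO_merge.
  - by apply: val_inj; rewrite val_insubd Eo size_tuple eqxx.
  - by apply: val_inj; rewrite val_insubd Ev size_tuple eqxx.
case=> w; rewrite inE => /andP [g /andP [Do Dv]] [-> -> ->].
rewrite !val_insubd Hgo // Hgv // !eqxx Do Dv !andbT /=.
have [_ [_ [_ [_ ->]]]] := cnt_o w.
by move: g => /and4P [/eqP -> /eqP -> _ _].
Qed.

Lemma bridge N (P : seq opkind -> bool) (kf : 'I_N -> opkind) :
  #|[set s : {perm 'I_N} | P [seq kf (s j) | j <- enum 'I_N]]| =
  #|[set t : N.-tuple 'I_N | uniq t && P (map kf t)]|.
Proof.
pose phi (s : {perm 'I_N}) : N.-tuple 'I_N := [tuple s i | i < N].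
have inj : injective phi.
  move=> s1 s2 E; apply/permP => i.
  by have := congr1 (fun t => tnth t i) E; rewrite /= !tnth_mktuple.
rewrite -(card_imset _ inj); apply: eq_card => t; rewrite [RHS]inE.
apply/imsetP/idP.
  case=> s; rewrite inE => Hs ->.
  rewrite /= map_inj_uniq ?enum_uniq; last exact: perm_inj.
  by rewrite -map_comp.
case/andP => Hu HP.
have injt : injective (tnth t) by apply/tuple_uniqP.
exists (perm injt); last first.
  by apply: eq_from_tnth => i; rewrite tnth_mktuple permE.
rewrite inE.
suff -> : [seq kf (perm injt j) | j <- enum 'I_N] = map kf t by [].
rewrite -[in RHS](map_tnth_enum t) -[in RHS]map_comp; apply: eq_map => j /=.
by rewrite permE.
Qed.

Theorem mainTheorem2 (L Nocc no nv : nat) (hN1 : 1 <= Nocc) (hNL : Nocc < L) :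
  #|[set s : {perm 'I_(no + no + nv + nv)} | admissible s]| =
  catalan no * catalan nv * 'C(no + no + nv + nv, no + no)
    * (no`! ^ 2) * (nv`! ^ 2).
Proof.
have -> : #|[set s : {perm 'I_(no + no + nv + nv)} | admissible s]| =
   #|[set t : (no + no + nv + nv).-tuple 'I_(no + no + nv + nv) |
        uniq t && adm' (map (@kind_of no nv) t)]|.
  by rewrite -bridge.
rewrite -sum1dep_card (partition_big (fun t => map_tuple (@kind_of no nv) t) predT) //=.
rewrite (eq_bigr (fun w : (no + no + nv + nv).-tuple opkind => if goodc no nv w && adm' w
                           then no`! * no`! * nv`! * nv`! else 0)); last first.
  move=> w _; rewrite sum1dep_card.
  have -> : #|[set t : (no + no + nv + nv).-tuple 'I_(no + no + nv + nv) |
          uniq t && adm' (map (@kind_of no nv) t) && (map_tuple (@kind_of no nv) t == w)]|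
     = if adm' w then #|[set t : (no + no + nv + nv).-tuple 'I_(no + no + nv + nv) |
          [&& all predT t, uniq t & map (@kind_of no nv) t == w]]| else 0.
    case: ifP => Ha.
      apply: eq_card => t; rewrite !inE -val_eqE /= all_predT /=.
      by case: eqP => [->|]; rewrite ?Ha ?andbT ?andbF.
    apply/eqP; rewrite cards_eq0; apply/eqP/setP => t; rewrite !inE -val_eqE /=.
    by case: eqP => [->|]; rewrite ?Ha ?andbT ?andbF.
  case: ifP => Ha; last by rewrite andbF.
  rewrite fiber ?size_tuple //.
  rewrite (G_ext _ (c' := cc no nv)); last by move=> j; rewrite kind_card.
  by rewrite G_val ?size_tuple // andbT.
rewrite -big_mkcond /= sum_nat_const.
have -> : #|[pred w : (no + no + nv + nv).-tuple opkind | goodc no nv w && adm' w]| =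
   #|[set w : (no + no + nv + nv).-tuple opkind | goodc no nv w && adm' w]|.
  by apply: eq_card => w; rewrite inE.
rewrite shuffle_card -!catalan_dyck.
set a := catalan no; set b := catalan nv; set C := 'C(_, _).
rewrite -!mulnn; nia.
Qed.
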